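(* Let $r,s,k$ be integers with $1\le k\le\min\{r,s\}$, and let $F$ be a field with $|F|\ge k+2$. Then there exist $A\in F^{r\times r}$ and $B\in F^{s\times s}$ such that the linear code $C(A,B)$ has dimension $k$ and minimum distance $d=\lfloor r/k\rfloor s$.
   Context: $C(A,B):=\{X\in F^{r\times s}\mid AX=XB\}$, viewed as a linear code of length $rs$ by regarding each matrix as the vector of its $rs$ entries. The minimum (Hamming) distance of a subspace $C$ is $\min\{\text{number of nonzero entries of }w\mid w\in C,\ w\neq0\}$. *)

(* Defs.v *)
From mathcomp Require Import all_boot all_order all_algebra.
Set Implicit Arguments. Unset Strict Implicit. Unset Printing Implicit Defensive.
Import GRing.Theory.
Local Open Scope ring_scope.

Definition sylv_map (F : fieldType) (r s : nat) (A : 'M[F]_r) (B : 'M[F]_s)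
  (X : 'M[F]_(r, s)) : 'M[F]_(r, s) := A *m X - X *m B.

Definition inC (F : fieldType) (r s : nat) (A : 'M[F]_r) (B : 'M[F]_s)
  (X : 'M[F]_(r, s)) : Prop := A *m X = X *m B.

(* C(A,B) viewed as a subspace of F^(r*s) (vectorizing matrices with mxvec):
   the row space of this matrix is the kernel of X |-> AX - XB. *)
Definition Cmx (F : fieldType) (r s : nat) (A : 'M[F]_r) (B : 'M[F]_s)
  : 'M[F]_(r * s) := kermx (lin_mx (@sylv_map F r s A B)).

Definition code_dim (F : fieldType) (r s : nat) (A : 'M[F]_r) (B : 'M[F]_s)
  : nat := \rank (Cmx A B).

Definition wt (F : fieldType) (r s : nat) (X : 'M[F]_(r, s)) : nat :=
  #|[set ij : 'I_r * 'I_s | X ij.1 ij.2 != 0]|.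

Definition is_min_dist (F : fieldType) (r s : nat) (A : 'M[F]_r) (B : 'M[F]_s)
  (d : nat) : Prop :=
  (exists X : 'M[F]_(r, s), [/\ inC A B X, X != 0 & wt X = d]) /\
  (forall X : 'M[F]_(r, s), inC A B X -> X != 0 -> (d <= wt X)%N).

(* Main.v *)
Require Import Defs.
From mathcomp Require Import all_boot all_order all_algebra.
Local Open Scope ring_scope.
Import GRing.Theory.

Section Constr.
Variables (F : fieldType) (r' s' k' : nat) (c : F).
Hypothesis Hkr : (k'.+1 <= r'.+1)%N.
Hypothesis c0 : c != 0.
Hypothesis c1 : c != 1.

Local Notation r := r'.+1.
Local Notation s := s'.+1.
Local Notation k := k'.+1.
Local Notation q := (r %/ k)%N.

Lemma q_gt0 : (0 < q)%N.
Proof. by rewrite divn_gt0. Qed.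

Lemma kq_le : (q * k <= r)%N.
Proof. exact: leq_divM. Qed.

Definition g (i : 'I_r) : 'I_k := inord (minn (i %/ q) k').
Definition rep (b : 'I_k) : 'I_r := inord (b * q).

Lemma rep_lt (b : 'I_k) (j : nat) : (j < q)%N -> (b * q + j < r)%N.
Proof.
move=> jq; apply: leq_trans kq_le.
have hb : (b < k)%N := ltn_ord b.
apply: (@leq_trans ((b.+1) * q)%N).
  by rewrite mulSnr ltn_add2l.
by rewrite [X in (_ <= X)%N]mulnC leq_mul2r hb orbT.
Qed.

Lemma g_blk (b : 'I_k) (j : nat) : (j < q)%N -> g (inord (b * q + j)) = b.
Proof.
move=> jq; apply: val_inj; rewrite /g /= inordK; last by rewrite ltnS geq_minr.
rewrite inordK ?rep_lt // divnMDl ?q_gt0 // divn_small // addn0.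
by apply/minn_idPl; rewrite -ltnS ltn_ord.
Qed.

Lemma g_rep b : g (rep b) = b.
Proof. by have := @g_blk b 0 q_gt0; rewrite addn0. Qed.

Definition h i := rep (g i).
Lemma hh i : h (h i) = h i.
Proof. by rewrite /h g_rep. Qed.

Lemma blk_ge (b : 'I_k) : (q <= #|[set i | g i == b]|)%N.
Proof.
have inj : injective (fun j : 'I_q => (inord (b * q + j) : 'I_r)).
  move=> j1 j2 /(congr1 val); rewrite /= !inordK ?rep_lt //.
  by move/addnI/val_inj.
rewrite -{1}(card_ord q) -(card_imset (mem 'I_q) inj).
apply: subset_leq_card; apply/subsetP => i /imsetP [j _ ->].
by rewrite inE g_blk.
Qed.

Lemma blk0 : #|[set i | g i == ord0]| = q.
Proof.
apply/eqP; rewrite eqn_leq blk_ge andbT.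
have -> : [set i | g i == ord0] = [set (inord ((ord0 : 'I_k) * q + j) : 'I_r) | j : 'I_q].
  apply/setP => i; rewrite inE; apply/eqP/imsetP => [|[j _ ->]]; last first.
    by rewrite g_blk.
  move/(congr1 val); rewrite /g /= inordK; last by rewrite ltnS geq_minr.
  move=> hm.
  have iq : (i < q)%N.
    move: hm; rewrite /minn; case: ifP => _ hm.
      have : (i %/ q < 1)%N by rewrite hm.
      by rewrite ltn_divLR ?q_gt0 // mul1n.
    by rewrite hm divn1 ltn_ord.
  exists (Ordinal iq) => //; apply: val_inj; rewrite /= inordK ?mul0n ?add0n //.
by apply: leq_trans (leq_imset_card _ _) _; rewrite card_ord.
Qed.


Definition Am : 'M[F]_r := \matrix_(i, j) (j == h i)%:R.
Definition E0 : 'M[F]_s := \matrix_(l, j) (l == ord0)%:R.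
Definition Bm : 'M[F]_s := c%:M + (1 - c) *: E0.

Lemma AXE (X : 'M[F]_(r, s)) i j : (Am *m X) i j = X (h i) j.
Proof.
rewrite mxE (bigD1 (h i)) //= mxE eqxx mul1r big1 ?addr0 // => l hl.
by rewrite mxE (negbTE hl) mul0r.
Qed.

Lemma XE0 (X : 'M[F]_(r, s)) i j : (X *m E0) i j = X i ord0.
Proof.
rewrite mxE (bigD1 ord0) //= mxE eqxx mulr1 big1 ?addr0 // => l hl.
by rewrite mxE (negbTE hl) mulr0.
Qed.

Lemma XBE (X : 'M[F]_(r, s)) i j : (X *m Bm) i j = c * X i j + (1 - c) * X i ord0.
Proof.
rewrite mulmxDr mul_mx_scalar -scalemxAr mxE [(c *: X) i j]mxE mxE XE0 //.
Qed.

Definition P (X : 'M[F]_(r, s)) := forall i j, X i j = X (h i) ord0.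

Lemma inC_P X : inC Am Bm X <-> P X.
Proof.
have h1c : 1 - c != 0 by rewrite subr_eq0 eq_sym.
split => [HX | HP]; last first.
  apply/matrixP => i j; rewrite AXE XBE HP hh [X i j]HP [X i ord0]HP.
  by rewrite -mulrDl addrC subrK mul1r.
have E i j : X (h i) j = c * X i j + (1 - c) * X i ord0 by rewrite -AXE HX XBE.
have E2 i j : X (h i) j = X (h i) ord0.
  have := E (h i) j; rewrite hh => e.
  apply: (mulfI h1c).
  rewrite mulrBl mul1r {1}e addrAC subrr add0r //.
have F0 i : X i ord0 = X (h i) ord0 by rewrite E -mulrDl addrC subrK mul1r.
move=> i j; rewrite -F0; apply: (mulfI c0).
have := E i j; rewrite E2 -F0 => e'.
apply: (addIr ((1 - c) * X i ord0)); rewrite -e'.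
by rewrite -mulrDl addrC subrK mul1r.
Qed.

Lemma keyC X : (mxvec X <= Cmx Am Bm)%MS = (Am *m X == X *m Bm).
Proof.
rewrite /Cmx sub_kermx.
have -> : lin_mx (sylv_map Am Bm) = lin_mx (mulmx Am \- mulmxr Bm) by [].
by rewrite mul_vec_lin /= mxvec_eq0 subr_eq0.
Qed.

Definition Mb (b : 'I_k) : 'M[F]_(r, s) := \matrix_(i, j) (g i == b)%:R.
Definition G : 'M[F]_(k, r * s) := \matrix_(b < k) mxvec (Mb b).

Lemma P_Mb b : P (Mb b).
Proof. by move=> i j; rewrite !mxE /h g_rep. Qed.

Lemma P_decomp X : P X -> mxvec X = (\row_b X (rep b) ord0) *m G.
Proof.
move=> HP; rewrite mulmx_sum_row.
transitivity (mxvec (\sum_b X (rep b) ord0 *: Mb b)).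
  congr mxvec; apply/matrixP => i j; rewrite summxE (bigD1 (g i)) //= !mxE eqxx mulr1.
  rewrite big1 ?addr0; first by rewrite HP.
  by move=> b hb; rewrite !mxE eq_sym (negbTE hb) mulr0.
rewrite linear_sum; apply eq_bigr => b _. by rewrite rowK mxE linearZ.
Qed.

Lemma rankG : \rank G = k.
Proof.
apply/eqP; change (row_free G); rewrite -kermx_eq0; apply/eqP/row_matrixP => i.
rewrite row0.
have hu : row i (kermx G) *m G = 0 by rewrite -row_mul mulmx_ker row0.
move: (row i (kermx G)) hu => u hu.
have : mxvec (\sum_b u 0 b *: Mb b) = u *m G.
  rewrite linear_sum mulmx_sum_row; apply: eq_bigr => b _.
  by rewrite rowK linearZ.
rewrite hu; move/(congr1 vec_mx); rewrite mxvecK linear0 => /matrixP H.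
apply/rowP => b; have := H (rep b) ord0.
rewrite summxE (bigD1 b) //= !mxE g_rep eqxx mulr1 big1 ?addr0 => [->|]; first by [].
by move=> b' hb'; rewrite !mxE g_rep eq_sym (negbTE hb') mulr0.
Qed.

Lemma Cmx_eq : (Cmx Am Bm == G)%MS.
Proof.
apply/andP; split.
  apply/row_subP => i; rewrite -[row i _]vec_mxK.
  have : (mxvec (vec_mx (row i (Cmx Am Bm))) <= Cmx Am Bm)%MS.
    by rewrite vec_mxK row_sub.
  rewrite keyC => /eqP /inC_P HP.
  by rewrite (P_decomp _ HP) submxMl.
by apply/row_subP => b; rewrite rowK keyC; apply/eqP/inC_P/P_Mb.
Qed.

Lemma wtP X : P X -> wt X = (#|[set i | X i ord0 != 0%R]| * s)%N.
Proof.
move=> HP; rewrite /wt.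
have -> : [set ij : 'I_r * 'I_s | X ij.1 ij.2 != 0] =
          setX [set i | X i ord0 != 0] [set: 'I_s].
  by apply/setP => [[i j]]; rewrite !inE /= andbT [X i j]HP [X i ord0]HP.
by rewrite cardsX cardsT card_ord.
Qed.

Lemma boolR_neq0 (b : bool) : ((b%:R : F) != 0) = b.
Proof. by case: b; rewrite ?mulr1n ?mulr0n ?oner_eq0 ?eqxx. Qed.

Lemma main_constr : code_dim Am Bm = k /\ is_min_dist Am Bm (q * s)%N.
Proof.
split; first by rewrite /code_dim (eqmx_rank Cmx_eq) rankG.
split.
  exists (Mb ord0); split; first exact/inC_P/P_Mb.
    apply/negP => /eqP/matrixP /(_ (rep ord0) ord0).
    by rewrite !mxE g_rep eqxx ?mulr1n => /eqP; rewrite oner_eq0.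
  rewrite wtP; last exact: P_Mb.
  congr (_ * _)%N; rewrite -blk0; apply: eq_card => i.
  by rewrite !inE mxE boolR_neq0.
move=> X /inC_P HP nz; rewrite wtP // leq_mul2r; apply/orP; right.
case: (pickP [pred i | X i ord0 != 0]) => [i /= Hi | H0]; last first.
  exfalso; move/negP: nz; apply; apply/eqP/matrixP => i j; rewrite HP mxE.
  by apply/eqP; move/negbFE: (H0 (h i)).
have Hi' : X (h i) ord0 != 0 by rewrite -(HP i ord0).
apply: leq_trans (blk_ge (g i)) _; apply: subset_leq_card; apply/subsetP => i'.
by rewrite !inE => /eqP gi'; rewrite HP /h gi'.
Qed.

End Constr.

Theorem theorem4p3 (F : fieldType) (r s k : nat) :
  (1 <= k)%N -> (k <= minn r s)%N ->
  (exists f : 'I_(k + 2) -> F, injective f) ->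
  exists (A : 'M[F]_r) (B : 'M[F]_s),
    code_dim A B = k /\ is_min_dist A B ((r %/ k) * s)%N.
Proof.
case: k => // k' _ Hk [f fi].
have o0 : (0 < k'.+1 + 2)%N by [].
have o1 : (1 < k'.+1 + 2)%N by rewrite addn2.
have o2 : (2 < k'.+1 + 2)%N by rewrite addn2.
have [c [c0 c1]] : exists c : F, c != 0 /\ c != 1.
  set a := Ordinal o0; set b := Ordinal o1; set d := Ordinal o2.
  have nab : a != b by [].
  have nad : a != d by [].
  have nbd : b != d by [].
  case: (boolP ((f a != 0) && (f a != 1))) => [/andP[]|]; first by eauto.
  case: (boolP ((f b != 0) && (f b != 1))) => [/andP[]|]; first by eauto.
  case: (boolP ((f d != 0) && (f d != 1))) => [/andP[]|]; first by eauto.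
  rewrite !negb_and !negbK.
  move=> /orP[]/eqP Hd /orP[]/eqP Hb /orP[]/eqP Ha; exfalso;
  by [move/negP: nab; apply; apply/eqP/fi; rewrite Ha Hb
     |move/negP: nad; apply; apply/eqP/fi; rewrite Ha Hd
     |move/negP: nbd; apply; apply/eqP/fi; rewrite Hb Hd].
case: r Hk => [|r']; first by rewrite min0n.
case: s => [|s']; first by rewrite minn0.
rewrite leq_min => /andP[Hkr _].
exists (Am F r' k'), (Bm F s' c).
exact: (@main_constr F r' s' k' c Hkr c0 c1).
Qed.
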